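(* Let $\mathcal{X}=\mathcal{X}_1\times\cdots\times\mathcal{X}_K$ and let $P_1$ and $P_2$ be the transition kernels of the deterministic-scan Gibbs samplers targeting $\pi_1\in\mathcal{P}(\mathcal{X})$ and $\pi_2\in\mathcal{P}(\mathcal{X})$, respectively. Then for every $M\ge1$ and every $\mu\in\mathcal{N}(\pi_1,M)\cup\mathcal{N}(\pi_2,M)$, \[ \|\mu P_1-\mu P_2\|_{TV}\le 2MK\|\pi_1-\pi_2\|_{TV}. \]
   Context: $\mathcal{P}(\mathcal{X})$ is the set of probability distributions on $\mathcal{X}$; $\|\mu-\nu\|_{TV}=\sup_A|\mu(A)-\nu(A)|$. The deterministic-scan Gibbs sampler targeting $\pi$ is $P=P_{\cdot,1}\cdots P_{\cdot,K}$, where the $i$-th factor resamples coordinate $x_i$ from $\pi(\mathrm{d}x_i\mid\mathbf{x}^{(-i)})$, $\mathbf{x}^{(-i)}=(x_j)_{j\ne i}$, leaving other coordinates unchanged. $\mathcal{N}(\pi,M)=\{\mu\in\mathcal{P}(\mathcal{X}):\mu(A)\le M\pi(A)\ \forall A\}$; $\mu P(A)=\int P(\mathbf{x},A)\mu(\mathrm{d}\mathbf{x})$. *)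

(* Defs.v *)
From HB Require Import structures.
From mathcomp Require Import all_boot all_order all_algebra.
From mathcomp Require Import all_classical all_reals all_analysis measurable_realfun.
Set Implicit Arguments. Unset Strict Implicit. Unset Printing Implicit Defensive.
Import Order.TTheory GRing.Theory Num.Theory.
Local Open Scope classical_set_scope.
Local Open Scope ring_scope.

Definition prodm (K : nat) (dI : 'I_K -> measure_display)
  (T : forall i, measurableType (dI i)) := forall i : 'I_K, T i.

Definition prodm_display : measure_display. Proof. exact: default_measure_display. Qed.

Section prodm_instance.
Variables (K : nat) (dI : 'I_K -> measure_display)
  (T : forall i, measurableType (dI i)).

Definition prodm_gen : set (set (prodm T)) :=
  \bigcup_(i in [set: 'I_K])
    [set (fun x : prodm T => x i) @^-1` A | A in [set A : set (T i) | measurable A]].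

Definition prodm_measurable : set (set (prodm T)) := <<s prodm_gen >>.

HB.instance Definition _ := Pointed.on (prodm T).

Let prodm_set0 : prodm_measurable set0.
Proof. exact: sigma_algebra0. Qed.

Let prodm_setC A : prodm_measurable A -> prodm_measurable (~` A).
Proof. by move=> mA; rewrite -setTD; exact: sigma_algebraCD. Qed.

Let prodm_bigcup (F : (set (prodm T))^nat) :
  (forall i, prodm_measurable (F i)) -> prodm_measurable (\bigcup_i (F i)).
Proof. exact: sigma_algebra_bigcup. Qed.

HB.instance Definition _ := @isMeasurable.Build prodm_display (prodm T)
  prodm_measurable prodm_set0 prodm_setC prodm_bigcup.

End prodm_instance.

Section gibbs.
Variables (R : realType) (K : nat) (dI : 'I_K -> measure_display)
  (T : forall i, measurableType (dI i)).
Local Notation X := (prodm T).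

Definition update (x : X) (i : 'I_K) (y : T i) : X := dfwith x i y.
Arguments update : clear implicits.

(* Q is a version of the full conditional  pi(dx_i | x^(-i)) :
   - Q x is a probability measure on X_i,
   - Q x depends only on x^(-i) = (x_j)_{j <> i},
   - x |-> Q x B is measurable for every measurable B (Q is a kernel),
   - disintegration:  pi(A) = \int pi(dx) Q x {y | x with x_i:=y \in A}. *)
Definition full_conditional (pi : probability X R) (i : 'I_K)
    (Q : X -> probability (T i) R) : Prop :=
  [/\ (forall x x' : X, (forall j, j != i -> x j = x' j) -> Q x = Q x'),
      (forall B : set (T i), measurable B -> measurable_fun [set: X] (fun x : X => (Q x B : \bar R))) &
      (forall A : set X, measurable A ->
         pi A = \int[pi]_x (Q x (update x i @^-1` A)))%E].

(* one coordinate update  nu |-> nu P_{.,i}  where P_{.,i}(x,A) = Q x {y | update x i y \in A} *)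
Definition gibbs_step (i : 'I_K) (Q : X -> probability (T i) R)
    (nu : set X -> \bar R) : set X -> \bar R :=
  fun A => (\int[nu]_x (Q x (update x i @^-1` A)))%E.

(* deterministic scan:  mu P = mu P_{.,1} P_{.,2} ... P_{.,K} *)
Definition gibbs_scan (Q : forall i : 'I_K, X -> probability (T i) R)
    (mu : set X -> \bar R) : set X -> \bar R :=
  foldl (fun nu i => gibbs_step (Q i) nu) mu (enum 'I_K).

End gibbs.

Definition tv_dist d (T : measurableType d) (R : realType)
    (mu nu : set T -> \bar R) : \bar R :=
  ereal_sup [set (`|mu A - nu A|)%E | A in [set A : set T | measurable A]].

Definition nbhdN d (T : measurableType d) (R : realType)
    (pi : probability T R) (M : R) : set (probability T R) :=
  [set mu | forall A : set T, measurable A -> (mu A <= M%:E * pi A)%E].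

(* Main.v *)
Require Import Defs.
From HB Require Import structures.
From mathcomp Require Import all_boot all_order all_algebra.
From mathcomp Require Import all_classical all_reals all_analysis measurable_realfun.
From mathcomp Require Import lra.
Import Order.TTheory GRing.Theory Num.Theory.
Local Open Scope classical_set_scope.
Local Open Scope ring_scope.
Set Implicit Arguments.
Unset Strict Implicit.
Section key.
Context d (T : measurableType d) (R : realType).
Local Open Scope ereal_scope.

Lemma key_le (a b : {finite_measure set T -> \bar R}) (f : T -> \bar R) :
  measurable_fun setT f -> (forall x, 0 <= f x <= 1) ->
  exists P, measurable P /\
    \int[a]_x f x <= \int[b]_x f x + (a P - b P).
Proof.
move=> mf f01.
have f0 x : [set: T] x -> 0 <= f x by move=> _; case/andP: (f01 x).
pose nu := cadd (charge_of_finite_measure a) (cscale (-1) (charge_of_finite_measure b)).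
have [P [N hPN]] := Hahn_decomposition nu.
have mP : measurable P by case: hPN => -[].
exists P; split => //.
pose jp := jordan_pos hPN.
pose jn := jordan_neg hPN.
have eqm A : measurable A -> measure_add a jn A = measure_add b jp A.
  move=> mA; rewrite !measure_addE.
  have := jordan_decomp hPN mA.
  rewrite -/jp -/jn => h.
  have fa := fin_num_measure a A mA.
  have fb := fin_num_measure b A mA.
  have fp : jp A \is a fin_num by apply: fin_num_measure.
  have fn : jn A \is a fin_num by apply: fin_num_measure.
  have {}h : a A + (-1)%:E * b A = jp A + (-1)%:E * jn A := h.
  rewrite !mulN1e in h.
  have e (x y z w : \bar R) : x \is a fin_num -> y \is a fin_num -> z \is a fin_num ->
      w \is a fin_num -> x - y = z - w -> x + w = y + z.
    move: x y z w => [x| |] [y| |] [z| |] [w| |] //= _ _ _ _.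
    by rewrite ?(EFinN, EFinD) => -[] h'; congr (_%:E); lra.
  exact: (e _ _ _ _ fa fb fp fn h).
have hint : \int[a]_x f x + \int[jn]_x f x = \int[b]_x f x + \int[jp]_x f x.
  rewrite -!ge0_integral_measure_add //.
  by apply: eq_measure_integral => A mA _; exact: eqm.
have jpP : jp setT = a P - b P.
  by rewrite /jp jordan_posE cjordan_posE /crestr0 mem_set //= /crestr setTI /nu /cadd /= /cscale /= mulN1e.
have le1 : \int[jp]_x f x <= a P - b P.
  rewrite -jpP -[jp setT]mul1e -integral_cst //.
  apply: ge0_le_integral => //.
  by move=> x _; case/andP: (f01 x).
apply: (@le_trans _ _ (\int[a]_x f x + \int[jn]_x f x)).
  by rewrite leeDl // integral_ge0.
by rewrite hint leeD2l.
Qed.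
End key.
Section meas.
Context (R : realType) (K : nat) (dI : 'I_K -> measure_display)
  (T : forall i, measurableType (dI i)).
Local Notation X := (prodm T).

Lemma cyl_meas (j : 'I_K) (A : set (T j)) : measurable A ->
  measurable ((fun x : X => x j) @^-1` A).
Proof.
move=> mA; apply: sub_sigma_algebra; exists j => //; exists A => //.
Qed.

Lemma update_in (x : X) (i : 'I_K) (y : T i) : update x y i = y.
Proof. exact: dfwith_in. Qed.

Lemma update_out (x : X) (i : 'I_K) (y : T i) j : i != j -> update x y j = x j.
Proof. exact: dfwith_out. Qed.

Lemma update_meas (i : 'I_K) :
  measurable_fun setT (fun p : X * T i => update p.1 p.2).
Proof.
apply: (@measurability _ _ _ _ _ _ (@prodm_gen K dI T)) => //.
move=> _ [S [j _ [A mA <-]] <-].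
rewrite setTI.
have [ij|ij] := eqVneq i j.
  subst j.
  rewrite (_ : _ @^-1` _ = setT `*` A); first by apply: measurableX.
  apply/seteqP; split => -[x y]; rewrite /= update_in; tauto.
rewrite (_ : _ @^-1` _ = ((fun x : X => x j) @^-1` A) `*` setT).
  by apply: measurableX => //; exact: cyl_meas.
by apply/seteqP; split => -[x y]; rewrite /= update_out //; tauto.
Qed.

Lemma update_update (x : X) (i : 'I_K) (y z : T i) :
  update (update x y) z = update x z.
Proof.
apply: functional_extensionality_dep => j.
have [ij|ij] := eqVneq i j; first by subst j; rewrite !update_in.
by rewrite !update_out.
Qed.


Section kern.
Variables (i : 'I_K) (Q : X -> probability (T i) R)
  (HQ : forall B, measurable B -> measurable_fun setT (fun x => Q x B)).

Definition Qk : X -> {measure set T i -> \bar R} := fun x => Q x.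
HB.instance Definition _ := isKernel.Build _ _ _ _ R Qk HQ.
Lemma Qk_uub : measure_fam_uub Qk.
Proof. by exists 2%R => x; rewrite /Qk /= probability_setT lte_fin ltr1n. Qed.
HB.instance Definition _ := Kernel_isFinite.Build _ _ _ _ R Qk Qk_uub.

Lemma meas_g (A : set X) : measurable A ->
  measurable_fun setT (fun x => Q x (update x (i:=i) @^-1` A)).
Proof.
move=> mA.
have mB : measurable ((fun p : X * T i => update p.1 p.2) @^-1` A).
  by rewrite -[_ @^-1` _]setTI; apply: update_meas.
have := measurable_fun_xsection_finite_kernel Qk (mem_set mB).
congr measurable_fun; apply/funext => x; rewrite /Qk; congr (Q x _).
by apply/seteqP; split => y; rewrite /xsection /= inE.
Qed.
End kern.
Lemma sec_meas (i : 'I_K) (x : X) (A : set X) : measurable A ->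
  measurable (update x (i:=i) @^-1` A).
Proof.
move=> mA.
have mB : measurable ((fun p : X * T i => update p.1 p.2) @^-1` A).
  by rewrite -[_ @^-1` _]setTI; apply: update_meas.
have := measurable_xsection x mB.
by congr measurable; apply/seteqP; split => y; rewrite /xsection /= inE.
Qed.

Definition stepf (i : 'I_K) (Q : X -> probability (T i) R)
  (HQ : forall B, measurable B -> measurable_fun setT (fun x => Q x B))
  (nu : probability X R) : set X -> \bar R := gibbs_step Q nu.
Arguments stepf {i Q}.

Section step.
Variables (i : 'I_K) (Q : X -> probability (T i) R)
  (HQ : forall B, measurable B -> measurable_fun setT (fun x => Q x B))
  (nu : probability X R).
Local Open Scope ereal_scope.

Let s0 : stepf HQ nu set0 = 0.
Proof.
rewrite /stepf /gibbs_step.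
under eq_integral do rewrite preimage_set0 measure0.
by rewrite integral0.
Qed.

Let sge0 A : 0 <= stepf HQ nu A.
Proof. by apply: integral_ge0 => x _. Qed.

Let ssa : semi_sigma_additive (stepf HQ nu).
Proof.
move=> F mF tF mUF; rewrite /stepf /gibbs_step.
have -> : (fun x => Q x (update x (i:=i) @^-1` \bigcup_n F n)) =
    (fun x => \sum_(0 <= n <oo) Q x (update x (i:=i) @^-1` F n)).
  apply/funext => x; apply/esym/cvg_lim => //; rewrite preimage_bigcup.
  apply: measure_semi_sigma_additive.
  - by move=> n; exact: sec_meas.
  - by move=> m n _ _ [y [h1 h2]]; apply: tF => //; exists (update x y).
  - by rewrite -preimage_bigcup; exact: sec_meas.
rewrite integral_nneseries //; last by move=> n; exact: meas_g.
by apply: is_cvg_nneseries => n _ _; exact: integral_ge0.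
Qed.

HB.instance Definition _ := isMeasure.Build _ X R (stepf HQ nu) s0 sge0 ssa.

Let s1 : stepf HQ nu setT = 1.
Proof.
rewrite /stepf /gibbs_step.
have h x : Q x (update x (i:=i) @^-1` setT) = 1.
  by rewrite preimage_setT; exact: probability_setT.
under eq_integral do rewrite h.
by rewrite integral_cst // mul1e; exact: probability_setT.
Qed.

HB.instance Definition _ := Measure_isProbability.Build _ X R (stepf HQ nu) s1.
End step.

Definition stepP (i : 'I_K) (Q : X -> probability (T i) R)
  (HQ : forall B, measurable B -> measurable_fun setT (fun x => Q x B))
  (nu : probability X R) : probability X R := @stepf i Q HQ nu.


Section analysis.
Local Open Scope ereal_scope.

Lemma abs_le_of (a b t : \bar R) : a \is a fin_num -> b \is a fin_num ->
  a <= b + t -> b <= a + t -> `|a - b| <= t.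
Proof.
move: a b t => [a| |] [b| |] [t| |] //= _ _; rewrite ?leey //.
rewrite -!EFinD !lee_fin => h1 h2.
by rewrite ler_norml; apply/andP; split; lra.
Qed.

Lemma tv_ub d (U : measurableType d) (a b : set U -> \bar R) A :
  measurable A -> `|a A - b A| <= tv_dist a b.
Proof. by move=> mA; apply: ereal_sup_ubound; exists A. Qed.

Lemma tv_ge0 d (U : measurableType d) (a b : set U -> \bar R) : 0 <= tv_dist a b.
Proof. by apply: (le_trans _ (tv_ub a b (@measurable0 _ U))). Qed.

Lemma tv_le d (U : measurableType d) (a b : set U -> \bar R) t :
  (forall A, measurable A -> `|a A - b A| <= t) -> tv_dist a b <= t.
Proof. by move=> h; apply: ge_ereal_sup => _ [A mA <-]; exact: h. Qed.

Lemma tv_sym d (U : measurableType d) (a b : set U -> \bar R) :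
  tv_dist a b = tv_dist b a.
Proof.
have h (x y : \bar R) : `|x - y| = `|y - x|.
  by move: x y => [x| |] [y| |] //=; rewrite distrC.
rewrite /tv_dist; congr ereal_sup; apply/seteqP; split => _ [A mA <-];
  by exists A => //; rewrite h.
Qed.

Lemma int01_le1 d (U : measurableType d) (a : probability U R) (f : U -> \bar R) :
  measurable_fun setT f -> (forall x, 0 <= f x <= 1) ->
  0 <= \int[a]_x f x <= 1.
Proof.
move=> mf f01; rewrite integral_ge0 /=; last by move=> x _; case/andP: (f01 x).
apply: (@le_trans _ _ (\int[a]_x (cst 1 x))).
  apply: ge0_le_integral => //; first by move=> x _; case/andP: (f01 x).
  by move=> x _; case/andP: (f01 x).
by rewrite integral_cst // mul1e probability_le1.
Qed.

Lemma int01_fin d (U : measurableType d) (a : probability U R) (f : U -> \bar R) :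
  measurable_fun setT f -> (forall x, 0 <= f x <= 1) ->
  \int[a]_x f x \is a fin_num.
Proof.
move=> mf f01; have /andP[h0 h1] := int01_le1 a mf f01.
by rewrite ge0_fin_numE // (le_lt_trans h1) // ltey.
Qed.

Lemma int_tv d (U : measurableType d) (a b : probability U R) (f : U -> \bar R) :
  measurable_fun setT f -> (forall x, 0 <= f x <= 1) ->
  \int[a]_x f x <= \int[b]_x f x + tv_dist a b.
Proof.
move=> mf f01; have [P [mP h]] := key_le a b mf f01.
apply: le_trans h _; rewrite leeD2l //.
exact: le_trans (lee_abs _) (tv_ub a b mP).
Qed.

Lemma int_dom d (U : measurableType d) (a b : probability U R) (M : R) (f : U -> \bar R) :
  (0 <= M)%R -> (forall A, measurable A -> a A <= M%:E * b A) ->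
  measurable_fun setT f -> (forall x, 0 <= f x <= 1) ->
  \int[a]_x f x <= M%:E * \int[b]_x f x.
Proof.
move=> M0 hab mf f01.
pose Mn : {nonneg R} := NngNum M0.
have [P [mP h]] := key_le a (mscale Mn b) mf f01.
apply: le_trans h _.
rewrite ge0_integral_mscale //; last by move=> x _; case/andP: (f01 x).
rewrite -[leRHS]adde0 leeD2l // sube_le0; exact: hab.
Qed.


Lemma stepPE (i : 'I_K) (Q : X -> probability (T i) R)
  (HQ : forall B, measurable B -> measurable_fun setT (fun x => Q x B))
  (nu : probability X R) A :
  stepP HQ nu A = \int[nu]_x Q x (update x (i:=i) @^-1` A).
Proof. by []. Qed.

Lemma g01 (i : 'I_K) (Q : X -> probability (T i) R) x A : measurable A ->
  0 <= Q x (update x (i:=i) @^-1` A) <= 1.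
Proof.
by move=> mA; rewrite measure_ge0 /= probability_le1 //; exact: sec_meas.
Qed.

Lemma step_contract (i : 'I_K) (Q : X -> probability (T i) R)
  (HQ : forall B, measurable B -> measurable_fun setT (fun x => Q x B))
  (a b : probability X R) :
  tv_dist (stepP HQ a) (stepP HQ b) <= tv_dist a b.
Proof.
apply: tv_le => A mA; rewrite !stepPE.
have mg := meas_g HQ mA.
have g := fun x => g01 Q x mA.
apply: abs_le_of; try exact: int01_fin.
  exact: int_tv.
by rewrite tv_sym; exact: int_tv.
Qed.

Lemma step_dom (i : 'I_K) (Q : X -> probability (T i) R) (pi : probability X R)
  (HQ : forall B, measurable B -> measurable_fun setT (fun x => Q x B))
  (HF : full_conditional pi Q) (M : R) (nu : probability X R) :
  (0 <= M)%R -> (forall A, measurable A -> nu A <= M%:E * pi A) ->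
  forall A, measurable A -> stepP HQ nu A <= M%:E * pi A.
Proof.
move=> M0 hnu A mA; rewrite stepPE.
case: HF => _ _ ->//.
apply: int_dom => //; first exact: meas_g.
by move=> x; exact: g01.
Qed.

Lemma fin01 (v : \bar R) : 0 <= v <= 1 -> v = (fine v)%:E.
Proof.
case/andP=> h0 h1; rewrite fineK // ge0_fin_numE //.
by apply: (le_lt_trans h1); rewrite ltey.
Qed.

Lemma step_bound (i : 'I_K) (Q1 Q2 : X -> probability (T i) R)
  (pi1 pi2 : probability X R)
  (HQ1 : forall B, measurable B -> measurable_fun setT (fun x => Q1 x B))
  (HQ2 : forall B, measurable B -> measurable_fun setT (fun x => Q2 x B))
  (HF1 : full_conditional pi1 Q1) (HF2 : full_conditional pi2 Q2)
  (M t : R) (nu : probability X R) :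
  (0 <= M)%R -> (forall A, measurable A -> nu A <= M%:E * pi1 A) ->
  tv_dist pi1 pi2 <= t%:E ->
  tv_dist (stepP HQ1 nu) (stepP HQ2 nu) <= (2 * M * t)%:E.
Proof.
move=> M0 hnu ht.
apply: tv_le => A mA; rewrite !stepPE.
set g1 := fun x => Q1 x (update x (i:=i) @^-1` A).
set g2 := fun x => Q2 x (update x (i:=i) @^-1` A).
have mg1 : measurable_fun setT g1 by exact: meas_g.
have mg2 : measurable_fun setT g2 by exact: meas_g.
pose E := [set x | g2 x <= g1 x].
have mE : measurable E.
  by rewrite -[E]setTI; exact: measurable_lee.
pose A' := (A `&` E) `|` (~` A `&` ~` E).
have mA' : measurable A'.
  apply: measurableU; apply: measurableI => //; exact: measurableC.
have uu (x : X) (y : T i) : update (update x y) (i:=i) = update x (i:=i).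
  by apply/funext => z; exact: update_update.
have Qinv (Q : X -> probability (T i) R) : full_conditional pi1 Q \/ full_conditional pi2 Q ->
    forall (x : X) (y : T i), Q (update x y) = Q x.
  move=> hQ x y.
  have dep : forall x x' : X, (forall j, j != i -> x j = x' j) -> Q x = Q x'.
    by case: hQ => -[].
  by apply: dep => j ji; rewrite update_out // eq_sym.
have Q1inv := Qinv Q1 (or_introl HF1).
have Q2inv := Qinv Q2 (or_intror HF2).
have Einv (x : X) (y : T i) : E (update x y) <-> E x.
  by rewrite /E /= /g1 /g2 Q1inv Q2inv uu.
have secE x : E x -> update x (i:=i) @^-1` A' = update x (i:=i) @^-1` A.
  move=> Ex; apply/seteqP; split => y /=.
  - by case=> -[] // _ /Einv.
  - by move=> Ay; left; split => //; apply/Einv.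
have secNE x : ~ E x -> update x (i:=i) @^-1` A' = ~` (update x (i:=i) @^-1` A).
  move=> Ex; apply/seteqP; split => y /=.
  - by case=> -[] // _ /Einv.
  - by move=> Ay; right; split => // /Einv.
set g1' := fun x => Q1 x (update x (i:=i) @^-1` A').
set g2' := fun x => Q2 x (update x (i:=i) @^-1` A').
have mg1' : measurable_fun setT g1' by exact: meas_g.
have mg2' : measurable_fun setT g2' by exact: meas_g.
pose h := fun x => g1' x - g2' x.
have mh : measurable_fun setT h by exact: emeasurable_funB.
have pt x : [/\ g1' x = g2' x + h x, 0 <= h x <= 1, g1 x <= g2 x + h x
    & g2 x <= g1 x + h x].
  have e1 : g1 x = (fine (g1 x))%:E := fin01 (g01 Q1 x mA).
  have e2 : g2 x = (fine (g2 x))%:E := fin01 (g01 Q2 x mA).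
  have b1 : (0 <= fine (g1 x) <= 1)%R.
    by have := g01 Q1 x mA; rewrite -/(g1 x) e1 !lee_fin.
  have b2 : (0 <= fine (g2 x) <= 1)%R.
    by have := g01 Q2 x mA; rewrite -/(g2 x) e2 !lee_fin.
  rewrite /h /g1' /g2'.
  have [Ex|Ex] := pselect (E x).
    have Ex' : (fine (g2 x) <= fine (g1 x))%R.
      by move: Ex; rewrite /E /= e1 e2 lee_fin.
    rewrite !secE // -/(g1 x) -/(g2 x) e1 e2.
    rewrite -!EFinN -!EFinD !lee_fin; split; [congr (_%:E); lra | apply/andP; split; lra | lra | lra].
  have Ex' : (fine (g1 x) < fine (g2 x))%R.
    by move: Ex; rewrite /E /= e1 e2 lee_fin => /negP; rewrite -ltNge.
  rewrite !secNE // !probability_setC; try exact: sec_meas.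
  rewrite -/(g1 x) -/(g2 x) e1 e2.
  rewrite -!EFinN -!EFinD !lee_fin; split; [congr (_%:E); lra | apply/andP; split; lra | lra | lra].
have g1'01 x : 0 <= g1' x <= 1 by exact: g01.
have g2'01 x : 0 <= g2' x <= 1 by exact: g01.
have g101 x : 0 <= g1 x <= 1 by exact: g01.
have g201 x : 0 <= g2 x <= 1 by exact: g01.
have h01 x : 0 <= h x <= 1 by case: (pt x).
have ge0 (f : X -> \bar R) : (forall x, 0 <= f x <= 1) -> forall x, setT x -> 0 <= f x.
  by move=> hf x _; case/andP: (hf x).
have I1 : \int[pi1]_x g1' x = pi1 A' by case: HF1 => _ _ /(_ A' mA') ->.
have I2 : \int[pi2]_x g2' x = pi2 A' by case: HF2 => _ _ /(_ A' mA') ->.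
have I3 : \int[pi2]_x g2' x <= \int[pi1]_x g2' x + t%:E.
  apply: le_trans (int_tv pi2 pi1 mg2' g2'01) _.
  by rewrite leeD2l // tv_sym.
have I4 : \int[pi1]_x g1' x = \int[pi1]_x g2' x + \int[pi1]_x h x.
  rewrite -ge0_integralD //; try solve [exact: (ge0 _ g2'01) | exact: (ge0 _ h01) | exact: (ge0 _ g201) | exact: (ge0 _ g101)].
  by apply: eq_integral => x _; case: (pt x).
have I5 : `|pi1 A' - pi2 A'| <= t%:E := le_trans (tv_ub pi1 pi2 mA') ht.
have I6 : \int[nu]_x g1 x <= \int[nu]_x g2 x + \int[nu]_x h x.
  rewrite -ge0_integralD //; try solve [exact: (ge0 _ g2'01) | exact: (ge0 _ h01) | exact: (ge0 _ g201) | exact: (ge0 _ g101)].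
  apply: ge0_le_integral => //; try solve [exact: (ge0 _ g201) | exact: (ge0 _ g101)].
  - by apply: emeasurable_funD.
  - by move=> x _; case: (pt x).
have I7 : \int[nu]_x g2 x <= \int[nu]_x g1 x + \int[nu]_x h x.
  rewrite -ge0_integralD //; try solve [exact: (ge0 _ g2'01) | exact: (ge0 _ h01) | exact: (ge0 _ g201) | exact: (ge0 _ g101)].
  apply: ge0_le_integral => //; try solve [exact: (ge0 _ g201) | exact: (ge0 _ g101)].
  - by apply: emeasurable_funD.
  - by move=> x _; case: (pt x).
have I8 : \int[nu]_x h x <= M%:E * \int[pi1]_x h x.
  exact: int_dom.
have fe (v : \bar R) : 0 <= v <= 1 -> exists r, v = r%:E.
  by move=> hv; exists (fine v); exact: fin01.
have [a1 Ea1] := fe _ (int01_le1 nu mg1 g101).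
have [a2 Ea2] := fe _ (int01_le1 nu mg2 g201).
have [a3 Ea3] := fe _ (int01_le1 nu mh h01).
have [b1 Eb1] := fe _ (int01_le1 pi1 mg1' g1'01).
have [b2 Eb2] := fe _ (int01_le1 pi1 mg2' g2'01).
have [b3 Eb3] := fe _ (int01_le1 pi1 mh h01).
have [c2 Ec2] := fe _ (int01_le1 pi2 mg2' g2'01).
have [p1 Ep1] : exists r, pi1 A' = r%:E.
  by apply: fe; rewrite measure_ge0 probability_le1.
have [p2 Ep2] : exists r, pi2 A' = r%:E.
  by apply: fe; rewrite measure_ge0 probability_le1.
rewrite Ea1 Ea2 in I6 I7 *; rewrite Ea3 in I6 I7 I8.
rewrite Eb1 Ep1 in I1; rewrite Ec2 Ep2 in I2; rewrite Ec2 Eb2 in I3.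
rewrite Eb1 Eb2 Eb3 in I4; rewrite Eb3 in I8; rewrite Ep1 Ep2 in I5.
move: I1 I2 => -[] I1 -[] I2.
move: I4 => /eqP; rewrite -EFinD eqe => /eqP I4.
rewrite -!EFinD !lee_fin in I3 I6 I7.
rewrite -EFinM lee_fin in I8.
rewrite -EFinB lee_fin ler_norml in I5.
case/andP: I5 => I5a I5b.
have Hb3 : (b3 <= 2 * t)%R by lra.
have := ler_wpM2l M0 Hb3 => HM.
apply: abs_le_of => //; rewrite -EFinD lee_fin; lra.
Qed.

Definition Sc (Q : forall i, X -> probability (T i) R)
  (HQ : forall i B, measurable B -> measurable_fun setT (fun x => Q i x B))
  (s : seq 'I_K) (nu : probability X R) : probability X R :=
  foldl (fun nu i => stepP (HQ i) nu) nu s.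

Lemma Sc_gibbs (Q : forall i, X -> probability (T i) R)
  (HQ : forall i B, measurable B -> measurable_fun setT (fun x => Q i x B))
  (s : seq 'I_K) (nu : probability X R) :
  foldl (fun nu i => gibbs_step (Q i) nu) (nu : set X -> \bar R) s = Sc HQ s nu.
Proof.
elim: s nu => [|i s IH] nu //=.
exact: (IH (stepP (HQ i) nu)).
Qed.

Lemma Sc_contract (Q : forall i, X -> probability (T i) R)
  (HQ : forall i B, measurable B -> measurable_fun setT (fun x => Q i x B))
  (s : seq 'I_K) (a b : probability X R) :
  tv_dist (Sc HQ s a) (Sc HQ s b) <= tv_dist a b.
Proof.
elim: s a b => [|i s IH] a b //=.
exact: le_trans (IH _ _) (step_contract _ _ _).
Qed.

Lemma prob_fin (a : probability X R) A : measurable A -> exists r, a A = r%:E.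
Proof.
move=> mA; exists (fine (a A)); apply: fin01.
by rewrite measure_ge0 probability_le1.
Qed.

Lemma prob_fin01 (a : probability X R) A : measurable A ->
  exists r, a A = r%:E /\ (0 <= r <= 1)%R.
Proof.
move=> mA; exists (fine (a A)).
have h : 0 <= a A <= 1 by rewrite measure_ge0 probability_le1.
split; first exact: fin01.
have e := fin01 h.
by move: h; rewrite {1 2}e !lee_fin.
Qed.

Lemma tv_tri (a b c : probability X R) :
  tv_dist a c <= tv_dist a b + tv_dist b c.
Proof.
apply: tv_le => A mA.
apply: le_trans (leeD (tv_ub a b mA) (tv_ub b c mA)).
have [x ->] := prob_fin a mA.
have [y ->] := prob_fin b mA.
have [z ->] := prob_fin c mA.
rewrite -!EFinB -EFinD lee_fin.
exact: ler_distD.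
Qed.

Lemma tv_self (a : probability X R) : tv_dist a a <= 0.
Proof.
apply: tv_le => A mA.
have [x ->] := prob_fin a mA.
by rewrite -EFinB subrr /= normr0.
Qed.

Lemma main_ind (pi1 pi2 : probability X R)
  (Q1 Q2 : forall i : 'I_K, X -> probability (T i) R)
  (HF1 : forall i, full_conditional pi1 (Q1 i))
  (HF2 : forall i, full_conditional pi2 (Q2 i))
  (HQ1 : forall i B, measurable B -> measurable_fun setT (fun x => Q1 i x B))
  (HQ2 : forall i B, measurable B -> measurable_fun setT (fun x => Q2 i x B))
  (M t : R) : (0 <= M)%R -> tv_dist pi1 pi2 <= t%:E ->
  forall s (nu : probability X R),
  (forall A, measurable A -> nu A <= M%:E * pi1 A) ->
  tv_dist (Sc HQ1 s nu) (Sc HQ2 s nu) <= (2 * M * t * (size s)%:R)%:E.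
Proof.
move=> M0 ht s; elim: s => [|i s IH] nu hnu /=.
  by rewrite mulr0; exact: tv_self.
apply: le_trans (tv_tri _ (Sc HQ2 s (stepP (HQ1 i) nu)) _) _.
have h1 := IH (stepP (HQ1 i) nu) (step_dom (HQ1 i) (HF1 i) M0 hnu).
have h2 := Sc_contract HQ2 s (stepP (HQ1 i) nu) (stepP (HQ2 i) nu).
have h3 := step_bound (HQ1 i) (HQ2 i) (HF1 i) (HF2 i) M0 hnu ht.
apply: le_trans (leeD h1 (le_trans h2 h3)) _.
rewrite -EFinD lee_fin.
have -> : ((size s).+1%:R : R) = ((size s)%:R + 1)%R by rewrite natr1.
by rewrite mulrDr mulr1.
Qed.

End analysis.
End meas.

Unset Implicit Arguments.
Set Strict Implicit.

Theorem proposition2p2 (R : realType) (K : nat) (dI : 'I_K -> measure_display)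
  (T : forall i, measurableType (dI i))
  (pi1 pi2 : probability (prodm T) R)
  (Q1 Q2 : forall i : 'I_K, prodm T -> probability (T i) R)
  (HQ1 : forall i, full_conditional pi1 (Q1 i))
  (HQ2 : forall i, full_conditional pi2 (Q2 i))
  (M : R) (HM : 1 <= M)
  (mu : probability (prodm T) R)
  (Hmu : mu \in nbhdN pi1 M `|` nbhdN pi2 M) :
  (tv_dist (gibbs_scan Q1 mu) (gibbs_scan Q2 mu)
     <= (2 * M * K%:R)%:E * tv_dist pi1 pi2)%E.
Proof.
have HQm1 : forall i B, measurable B -> measurable_fun setT (fun x => Q1 i x B).
  by move=> i; case: (HQ1 i).
have HQm2 : forall i B, measurable B -> measurable_fun setT (fun x => Q2 i x B).
  by move=> i; case: (HQ2 i).
have M0 : (0 <= M)%R by apply: le_trans HM.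
have tv01 : (0 <= tv_dist pi1 pi2 <= 1)%E.
  rewrite tv_ge0 /=; apply: tv_le => A mA.
  have [x [-> /andP[h1 h2]]] := prob_fin01 pi1 mA.
  have [y [-> /andP[h3 h4]]] := prob_fin01 pi2 mA.
  rewrite -EFinB lee_fin.
  by rewrite ler_norml; apply/andP; split; lra.
have Et := fin01 tv01.
set t := fine (tv_dist pi1 pi2) in Et.
rewrite /gibbs_scan (Sc_gibbs HQm1) (Sc_gibbs HQm2) Et -EFinM.
move: Hmu; rewrite in_setU => /orP [] /set_mem hmu.
  have ht1 : (tv_dist pi1 pi2 <= t%:E)%E by rewrite Et.
  have := main_ind HQ1 HQ2 HQm1 HQm2 M0 ht1 (enum 'I_K) hmu.
  by rewrite size_enum_ord => /le_trans; apply; rewrite lee_fin mulrAC.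
have ht : (tv_dist pi2 pi1 <= t%:E)%E by rewrite tv_sym Et.
have := main_ind HQ2 HQ1 HQm2 HQm1 M0 ht (enum 'I_K) hmu.
by rewrite tv_sym size_enum_ord => /le_trans; apply; rewrite lee_fin mulrAC.
Qed.
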